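(* Let $\Sigma_1$ and $\Sigma_2$ be connected graphs (multiple edges allowed, no loops) with $n$ vertices each containing exactly one cycle. If $\Sigma_1^*\cong\Sigma_2^*$, then $\Sigma_1\cong\Sigma_2$.
   Context: A cycle may consist of two vertices joined by two parallel edges. For such a graph $\Sigma$, the dual graph $\Sigma^*$ has as vertices the edges of $\Sigma$; two vertices are joined by an edge if the corresponding edges have a common endpoint, except that if two edges of $\Sigma$ form a cycle (i.e., are parallel edges), the corresponding vertices of $\Sigma^*$ are joined by a dotted edge (a distinguished edge type). Isomorphisms of dual graphs preserve the edge types. *)

(* Defs.v *)
From mathcomp Require Import all_boot.
Set Implicit Arguments. Unset Strict Implicit. Unset Printing Implicit Defensive.

(* Parallel edges are distinct elements of E with the same endpoints. *)

Section Graphs.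
Variables (V E : finType) (ends : E -> {set V}).

Definition loopless : Prop := forall e, #|ends e| = 2.

Definition adj_in (S : {set E}) : rel V :=
  fun u v => [exists e in S, [&& u \in ends e, v \in ends e & u != v]].

Definition connected_graph : Prop :=
  forall u v : V, connect (adj_in setT) u v.

Definition touches (S : {set E}) (v : V) : bool := [exists e in S, v \in ends e].

(* C is (the edge set of) a cycle: nonempty, 2-regular on its vertices,
   and connected.  Two parallel edges form a cycle of length 2. *)
Definition is_cycle (C : {set E}) : Prop :=
  [/\ C != set0,
      (forall v, touches C v -> #|[set e in C | v \in ends e]| = 2) &
      (forall u v, touches C u -> touches C v -> connect (adj_in C) u v)].

Definition unicyclic : Prop := exists! C : {set E}, is_cycle C.

End Graphs.

(* Edge types of the dual graph Sigma^* (vertices = edges of Sigma). *)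
Inductive dual_edge := NoEdge | Plain | Dotted.

Definition dual_label (V E : finType) (ends : E -> {set V}) (e f : E) : dual_edge :=
  if e == f then NoEdge
  else if ends e == ends f then Dotted            (* parallel edges: a 2-cycle *)
  else if [exists v, (v \in ends e) && (v \in ends f)] then Plain
  else NoEdge.

Definition dual_iso (V1 E1 V2 E2 : finType)
    (ends1 : E1 -> {set V1}) (ends2 : E2 -> {set V2}) : Prop :=
  exists phi : E1 -> E2, bijective phi /\
    forall e f, dual_label ends2 (phi e) (phi f) = dual_label ends1 e f.

Definition graph_iso (V1 E1 V2 E2 : finType)
    (ends1 : E1 -> {set V1}) (ends2 : E2 -> {set V2}) : Prop :=
  exists (fV : V1 -> V2) (fE : E1 -> E2),
    [/\ bijective fV, bijective fE & forall e, ends2 (fE e) = fV @: ends1 e].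

(* Main.v *)
Require Import Defs.
From mathcomp Require Import all_boot.
From Stdlib Require Import Classical.
Set Implicit Arguments. Unset Strict Implicit. Unset Printing Implicit Defensive.

Lemma two_set (T : finType) (A : {set T}) a b :
  #|A| = 2 -> a \in A -> b \in A -> a != b -> A = [set a; b].
Proof.
move=> cA aA bA ab; apply/esym/eqP; rewrite eqEcard cards2 ab cA leqnn andbT.
by apply/subsetP=> x; rewrite !inE => /orP[] /eqP ->.
Qed.

Lemma two_other (T : finType) (A : {set T}) a :
  #|A| = 2 -> a \in A -> exists2 b, b != a & A = [set a; b].
Proof.
move=> cA aA; have: 1 < #|A| by rewrite cA.
rewrite (cardsD1 a) aA ltnS card_gt0 => /set0Pn[b]; rewrite !inE => /andP[ba bA].
by exists b => //; apply: two_set; rewrite // eq_sym.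
Qed.

Lemma two_inter (T : finType) (A B : {set T}) x y :
  #|A| = 2 -> #|B| = 2 -> A != B -> x \in A -> x \in B -> y \in A -> y \in B -> x = y.
Proof.
move=> cA cB AB xA xB yA yB; apply/eqP/negP=> /negP xy.
by move: AB; rewrite (two_set cA xA yA xy) (two_set cB xB yB xy) eqxx.
Qed.

Lemma two_exists_ne (T : finType) (A : {set T}) x :
  #|A| = 2 -> exists2 w, w \in A & w != x.
Proof.
move=> cA; have: 0 < #|A| by rewrite cA.
rewrite card_gt0 => /set0Pn[a aA].
case: (two_other cA aA) => b ba AE.
case: (eqVneq a x) => [ax|ax]; last by exists a.
by exists b; rewrite ?AE ?inE ?eqxx ?orbT // -ax.
Qed.

Lemma imset2 (T T' : finType) (f : T -> T') a b : f @: [set a; b] = [set f a; f b].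
Proof. by rewrite imsetU1 imset_set1. Qed.

Section Basic.
Variables (V E : finType) (ends : E -> {set V}).
Hypothesis L : loopless ends.

Definition share (e f : E) := [exists v, (v \in ends e) && (v \in ends f)].

Lemma adj_sym S : symmetric (adj_in ends S).
Proof.
move=> u v; apply/existsP/existsP=> -[e /and4P[eS ue ve uv]]; exists e;
  by rewrite eS ue ve eq_sym uv.
Qed.

Lemma closed_all (X : {set V}) x0 :
  connected_graph ends -> x0 \in X ->
  (forall e u w, u \in X -> u \in ends e -> w \in ends e -> w \in X) ->
  forall w, w \in X.
Proof.
move=> K x0X cl w.
have cX : closed (adj_in ends setT) (mem X).
  move=> u v /existsP[e /and4P[_ ue ve _]].
  apply/idP/idP => [uX|vX]; first exact: cl uX ue ve.
  exact: cl vX ve ue.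
by rewrite -(closed_connect cX (K x0 w)).
Qed.

Lemma has_edge : connected_graph ends -> 1 < #|V| -> forall v, exists e, v \in ends e.
Proof.
move=> K c2 v; case: (boolP [exists e, v \in ends e]) => [/existsP//|/existsPn nE]; exfalso.
have : 0 < #|[set~ v]| by rewrite cardsC1 -ltnS prednK // ltnW.
rewrite card_gt0 => /set0Pn[w]; rewrite !inE => wv.
have := @closed_all [set v] v K (set11 v).
suff H: (forall e u w, u \in [set v] -> u \in ends e -> w \in ends e -> w \in [set v]).
  by move=> /(_ H w); rewrite inE (negbTE wv).
by move=> e u w' /set1P -> ve; move: (nE e); rewrite ve.
Qed.

Lemma touchesP (S : {set E}) v : reflect (exists2 e, e \in S & v \in ends e) (touches ends S v).
Proof. by apply: (iffP existsP) => [[e /andP[]]|[e eS ve]]; [exists e | exists e; rewrite eS]. Qed.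

Lemma cycle_hub (C : {set E}) a :
  (forall u, touches ends C u -> u = a \/ adj_in ends C a u) ->
  forall u v, touches ends C u -> touches ends C v -> connect (adj_in ends C) u v.
Proof.
move=> H u v tu tv.
have sym := adj_sym C.
have ha w : touches ends C w -> connect (adj_in ends C) a w.
  by move=> /H[-> | ?]; [exact: connect0 | exact: connect1].
by apply: (@connect_trans _ _ a); [rewrite (sym_connect_sym sym); exact: ha | exact: ha].
Qed.

Lemma adjP (S : {set E}) u v : reflect (exists e, [/\ e \in S, u \in ends e, v \in ends e & u != v]) (adj_in ends S u v).
Proof.
apply: (iffP existsP) => [[e /and4P[*]]|[e [*]]]; exists e => //.
by apply/and4P.
Qed.

Lemma cycle2 e f : e != f -> ends e = ends f -> is_cycle ends [set e; f].
Proof.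
move=> ef Eef.
have: 0 < #|ends e| by rewrite L.
rewrite card_gt0 => /set0Pn[a ae]; case: (two_other (L e) ae) => b ba eE.
have tP u : touches ends [set e; f] u -> u \in ends e.
  by case/touchesP=> g; rewrite !inE => /orP[]/eqP->; rewrite ?Eef.
split.
- by apply/set0Pn; exists e; rewrite !inE eqxx.
- move=> u /tP ue.
  have -> : [set g in [set e; f] | u \in ends g] = [set e; f].
    apply/setP=> g; rewrite !inE; have [->|ge] := eqVneq g e; first by rewrite /= ue.
    have [->|gf] := eqVneq g f; first by rewrite /= -Eef ue.
    by [].
  by rewrite cards2 ef.
- apply: (cycle_hub (a := a)) => u /tP; rewrite eE !inE => /orP[]/eqP->; [by left | right].
  by apply/adjP; exists e; rewrite eE !inE !eqxx orbT; split => //; rewrite eq_sym.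
Qed.

Lemma filt3 (T : finType) (e f g : T) (P : pred T) :
  e != f -> f != g -> e != g -> P e + P f + P g = 2 ->
  #|[set h in [set e; f; g] | P h]| = 2.
Proof.
move=> ef fg eg; have fe := ef; rewrite eq_sym in fe; have gf := fg; rewrite eq_sym in gf;
have ge := eg; rewrite eq_sym in ge.
have E3 : [set h in [set e; f; g] | P h] =
   [set h | [|| (h == e) && P e, (h == f) && P f | (h == g) && P g]].
  apply/setP=> h; rewrite !inE.
  have [->|he] := eqVneq h e; first by rewrite (negbTE ef) (negbTE eg) /= ?andbF ?orbF ?andbT.
  have [->|hf] := eqVneq h f; first by rewrite (negbTE fg) /= ?andbF ?orbF ?andbT.
  have [->|hg] := eqVneq h g; first by rewrite /= ?andbF ?orbF ?andbT.
  by [].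
rewrite E3.
case Pe: (P e); case Pf: (P f); case Pg: (P g) => //= _.
- rewrite (_ : [set h | _] = [set e; f]) ?cards2 ?ef //.
  by apply/setP=> h; rewrite !inE !andbT !andbF ?orbF.
- rewrite (_ : [set h | _] = [set e; g]) ?cards2 ?eg //.
  by apply/setP=> h; rewrite !inE !andbT !andbF ?orbF.
- rewrite (_ : [set h | _] = [set f; g]) ?cards2 ?fg //.
  by apply/setP=> h; rewrite !inE !andbT !andbF ?orbF.
Qed.

Lemma cycle3 a b c e f g : a != b -> b != c -> c != a ->
  ends e = [set a; b] -> ends f = [set b; c] -> ends g = [set c; a] ->
  is_cycle ends [set e; f; g].
Proof.
move=> ab bc ca eE fE gE.
have ef : e != f.
  apply/eqP=> ef; have: a \in ends f by rewrite -ef eE !inE eqxx.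
  by rewrite fE !inE (negbTE ab) eq_sym (negbTE ca).
have fg : f != g.
  apply/eqP=> fg; have: b \in ends g by rewrite -fg fE !inE eqxx.
  by rewrite gE !inE (negbTE bc) eq_sym (negbTE ab).
have eg : e != g.
  apply/eqP=> eg; have: c \in ends e by rewrite eg gE !inE eqxx.
  by rewrite eE !inE (negbTE ca) eq_sym (negbTE bc).
have tP u : touches ends [set e; f; g] u -> [|| u == a, u == b | u == c].
  case/touchesP=> h; rewrite !inE => /orP[/orP[]|] /eqP->; rewrite ?eE ?fE ?gE !inE;
  by case/orP => ->; rewrite ?orbT.
split.
- by apply/set0Pn; exists e; rewrite !inE eqxx.
- move=> u /tP /or3P[]/eqP-> ; apply: filt3 => //; rewrite eE fE gE !inE !eqxx /=.
  + by rewrite (negbTE ab) (eq_sym a c) (negbTE ca).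
  + by rewrite (eq_sym b a) (negbTE ab) (negbTE bc).
  + by rewrite (negbTE ca) (eq_sym c b) (negbTE bc).
- apply: (cycle_hub (a := a)) => u /tP /or3P[]/eqP->; [by left | right | right].
  + by apply/adjP; exists e; rewrite eE !inE !eqxx orbT; split.
  + by apply/adjP; exists g; rewrite gE; split; rewrite ?inE ?eqxx ?orbT // eq_sym.
Qed.

Lemma cycles_eq C1 C2 : unicyclic ends -> is_cycle ends C1 -> is_cycle ends C2 -> C1 = C2.
Proof. by case=> C0 [_ U] /U <- /U <-. Qed.

End Basic.

Section Labels.
Variables (V E : finType) (ends : E -> {set V}).
Hypothesis L : loopless ends.

Lemma shareP e f : reflect (exists2 v, v \in ends e & v \in ends f) (share ends e f).
Proof. by apply: (iffP existsP) => [[v /andP[]]|[v ve vf]]; exists v => //; rewrite ve. Qed.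

Lemma share_eq e f : ends e = ends f -> share ends e f.
Proof.
move=> Eef; have: 0 < #|ends e| by rewrite L.
by case/card_gt0P => v ve; apply/shareP; exists v; rewrite -?Eef.
Qed.

End Labels.

Section Transfer.
Variables (V1 E1 V2 E2 : finType) (ends1 : E1 -> {set V1}) (ends2 : E2 -> {set V2}).
Hypotheses (L1 : loopless ends1) (L2 : loopless ends2).
Variable phi : E1 -> E2.
Hypothesis phi_inj : injective phi.
Hypothesis hlab : forall e f, dual_label ends2 (phi e) (phi f) = dual_label ends1 e f.

Lemma tr_eq e f : e != f -> (ends2 (phi e) == ends2 (phi f)) = (ends1 e == ends1 f).
Proof.
move=> ef; have := hlab e f; rewrite /dual_label (inj_eq phi_inj) (negbTE ef).
by case: (ends2 (phi e) == ends2 (phi f)); case: (ends1 e == ends1 f); do ?case: ifP.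
Qed.

Lemma tr_share e f : e != f -> share ends2 (phi e) (phi f) = share ends1 e f.
Proof.
move=> ef; have := hlab e f; have := tr_eq ef; rewrite /dual_label (inj_eq phi_inj) (negbTE ef).
case Ee: (ends2 (phi e) == ends2 (phi f)) => /esym Ee1.
  by rewrite Ee1 (share_eq L2 (eqP Ee)) (share_eq L1 (eqP Ee1)).
rewrite Ee1.
by rewrite /share; do ?case: ifP.
Qed.

End Transfer.

Section Main.
Variables (V1 E1 V2 E2 : finType) (ends1 : E1 -> {set V1}) (ends2 : E2 -> {set V2}).
Hypotheses (L1 : loopless ends1) (L2 : loopless ends2).
Hypotheses (K1 : connected_graph ends1) (K2 : connected_graph ends2).
Hypothesis c3 : 2 < #|V1|.
Hypothesis cardE : #|V1| = #|V2|.
Variables (phi : E1 -> E2) (psi : E2 -> E1).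
Hypotheses (phiK : cancel phi psi) (psiK : cancel psi phi).
Hypothesis hlab : forall e f, dual_label ends2 (phi e) (phi f) = dual_label ends1 e f.
Hypothesis C1 : forall e f g v, e != f -> f != g -> e != g ->
  v \in ends1 e -> v \in ends1 f -> v \in ends1 g ->
  exists w, [/\ w \in ends2 (phi e), w \in ends2 (phi f) & w \in ends2 (phi g)].
Hypothesis C2 : forall e f g w, e != f -> f != g -> e != g ->
  w \in ends2 (phi e) -> w \in ends2 (phi f) -> w \in ends2 (phi g) ->
  exists v, [/\ v \in ends1 e, v \in ends1 f & v \in ends1 g].

Let phi_inj : injective phi := can_inj phiK.

Definition Dv v := [exists e, exists f, [&& v \in ends1 e, v \in ends1 f & ends1 e != ends1 f]].

Lemma DvP v : reflect (exists e f, [/\ v \in ends1 e, v \in ends1 f & ends1 e != ends1 f]) (Dv v).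
Proof.
apply: (iffP existsP).
  by move=> [e /existsP[f /and3P[ve vf ef]]]; exists e, f.
move=> [e [f [ve vf ef]]].
by exists e; apply/existsP; exists f; rewrite ve vf ef.
Qed.

Lemma stage1 : exists f1 : V1 -> V2, forall v, Dv v -> forall g, v \in ends1 g -> f1 v \in ends2 (phi g).
Proof.
have [w0 _] : exists w0 : V2, true.
  have : 0 < #|V2| by rewrite -cardE ltnW // ltnW.
  by case/card_gt0P => w _; exists w.
apply: (@fin_all_exists _ (fun _ => V2) (fun v w => Dv v -> forall g, v \in ends1 g -> w \in ends2 (phi g))) => v.
case: (boolP (Dv v)) => [/DvP[e [f [ve vf ef]]]|_]; last by exists w0.
have ef' : e != f by apply: contraNneq ef => ->.
have : share ends2 (phi e) (phi f).
  by rewrite (tr_share L1 L2 phi_inj hlab ef'); apply/shareP; exists v.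
case/shareP=> w we wf; exists w => _ g vg.
have [->|ge] := eqVneq g e; first by [].
have [->|gf] := eqVneq g f; first by [].
have fg : f != g by rewrite eq_sym.
have eg : e != g by rewrite eq_sym.
have [w' [w'e w'f w'g]] := C1 ef' fg eg ve vf vg.
have ne : ends2 (phi e) != ends2 (phi f) by rewrite (tr_eq phi_inj hlab ef').
by rewrite (two_inter (L2 (phi e)) (L2 (phi f)) ne we wf w'e w'f).
Qed.


Lemma main_iso : graph_iso ends1 ends2.
Proof.
have c2 : 1 < #|V1| by apply: ltnW.
have [f1 Hf1] := stage1.
have [fV HfV] : exists fV : V1 -> V2, forall v,
   [/\ forall g, v \in ends1 g -> fV v \in ends2 (phi g),
       Dv v -> fV v = f1 v &
       ~~ Dv v -> forall g u, v \in ends1 g -> u \in ends1 g -> u != v -> fV v != f1 u].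
  apply: (@fin_all_exists _ (fun _ => V2) (fun v w =>
   [/\ forall g, v \in ends1 g -> w \in ends2 (phi g),
       Dv v -> w = f1 v &
       ~~ Dv v -> forall g u, v \in ends1 g -> u \in ends1 g -> u != v -> w != f1 u])) => v.
  case: (boolP (Dv v)) => [Dv1|nDv].
    by exists (f1 v); split => //; apply: Hf1.
  have [e0 ve0] := has_edge K1 c2 v.
  have [u uv e0E] := two_other (L1 e0) ve0.
  have [w we0 wu] := two_exists_ne (f1 u) (L2 (phi e0)).
  have same g : v \in ends1 g -> ends1 g = ends1 e0.
    move=> vg; apply/eqP; apply: contraNT nDv => ne; apply/DvP; exists g, e0; split => //.
  exists w; split => //.
  - move=> g vg; have [->|ge] := eqVneq g e0; first by [].
    by move: (same g vg); move/eqP; rewrite -(tr_eq phi_inj hlab ge) => /eqP ->.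
  - move=> _ g u' vg u'g u'v; move: u'g; rewrite (same g vg) e0E !inE (negbTE u'v) /=.
    by move/eqP ->.
have Hin v g : v \in ends1 g -> fV v \in ends2 (phi g) by case: (HfV v) => + _ _; apply.
have key e a b : ends1 e = [set a; b] -> a != b -> Dv a -> fV a != fV b.
  move=> eE ab Da; case: (HfV a) => _ /(_ Da) fa _.
  case: (boolP (Dv b)) => [Db|nDb]; last first.
    case: (HfV b) => _ _ /(_ nDb e a) H; rewrite fa eq_sym; apply: H; rewrite ?eE ?inE ?eqxx ?orbT //.
  apply/eqP => fab.
  have getf x : Dv x -> exists f, x \in ends1 f /\ ends1 f != ends1 e.
    case/DvP=> e1 [e2 [xe1 xe2 e12]].
    case: (eqVneq (ends1 e1) (ends1 e)) => [E1e|]; last by exists e1.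
    by exists e2; split => //; rewrite -E1e eq_sym.
  have [f [af fe]] := getf a Da.
  have [g [bg ge]] := getf b Db.
  have ae : a \in ends1 e by rewrite eE !inE eqxx.
  have be : b \in ends1 e by rewrite eE !inE eqxx orbT.
  have bf : b \notin ends1 f.
    apply/negP=> bf; move: fe; rewrite (two_set (L1 f) af bf ab) -eE eqxx //.
  have ag : a \notin ends1 g.
    apply/negP=> ag; move: ge; rewrite (two_set (L1 g) ag bg ab) -eE eqxx //.
  have ef : e != f by apply: contraNneq fe => ->.
  have eg : e != g by apply: contraNneq ge => ->.
  have fg : f != g by apply: contraNneq bf => ->.
  have bg' := Hin _ _ bg; rewrite -fab in bg'.
  have [t [te tf tg]] := C2 ef fg eg (Hin _ _ ae) (Hin _ _ af) bg'.
  move: te; rewrite eE !inE => /orP[]/eqP tE; subst t.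
    by rewrite tg in ag.
  by rewrite tf in bf.
have neq e a b : ends1 e = [set a; b] -> a != b -> fV a != fV b.
  move=> eE ab; case: (boolP (Dv a)) => [Da|nDa]; first exact: key eE ab Da.
  case: (boolP (Dv b)) => [Db|nDb].
    have e' : ends1 e = [set b; a] by rewrite eE setUC.
    have ba : b != a by rewrite eq_sym.
    by rewrite eq_sym; apply: key e' ba Db.
  exfalso.
  have closed2 : forall h u w, u \in [set a; b] -> u \in ends1 h -> w \in ends1 h -> w \in [set a; b].
    move=> h u w uab uh wh.
    have same x : ~~ Dv x -> x \in ends1 e -> x \in ends1 h -> ends1 h = ends1 e.
      move=> nDx xe xh; apply/eqP; apply: contraNT nDx => ne; apply/DvP; exists h, e; split => //.
    case/set2P: uab => ?; subst u.
      by rewrite -eE -(same a nDa) // eE !inE eqxx.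
    by rewrite -eE -(same b nDb) // eE !inE eqxx orbT.
  have all2 := closed_all K1 (set21 a b) closed2.
  have : #|V1| <= 2.
    rewrite -cardsT (_ : [set: V1] = [set a; b]) ?cards2 //.
      by case: (a != b).
    by apply/setP=> x; rewrite inE all2.
  by rewrite leqNgt c3.
have Hends e : ends2 (phi e) = fV @: ends1 e.
  have : 0 < #|ends1 e| by rewrite L1.
  case/card_gt0P => a ae; have [b ba eE] := two_other (L1 e) ae.
  have ab : a != b by rewrite eq_sym.
  rewrite eE imset2; apply: two_set (L2 _) _ _ (neq e a b eE ab).
    by apply: Hin; rewrite eE !inE eqxx.
  by apply: Hin; rewrite eE !inE eqxx orbT.
have c2' : 1 < #|V2| by rewrite -cardE.
have imT : fV @: [set: V1] = [set: V2].
  apply/setP => w; rewrite inE.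
  have [e2 we2] := has_edge K2 c2' w.
  rewrite -(psiK e2) Hends in we2.
  by case/imsetP: we2 => x _ ->; apply: imset_f; rewrite inE.
have injV : injective fV.
  have H : {in [set: V1] &, injective fV}.
    by apply/imset_injP; rewrite imT !cardsT cardE.
  by move=> x y; apply: H; rewrite inE.
exists fV, phi; split.
- by apply: inj_card_bij injV _; rewrite cardE.
- exact: (Bijective phiK psiK).
- exact: Hends.
Qed.

End Main.

Lemma deg_le1 (V E : finType) (ends : E -> {set V}) (C : {set E}) e x :
  is_cycle ends C -> e \in C -> x \in ends e -> (forall g, g \in C -> x \in ends g -> g = e) -> False.
Proof.
case=> _ deg _ eC xe only.
have t : touches ends C x by apply/touchesP; exists e.
have := deg x t.
have : [set g in C | x \in ends g] \subset [set e].
  by apply/subsetP=> g; rewrite !inE => /andP[gC xg]; rewrite (only g gC xg).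
by move/subset_leq_card; rewrite cards1 => le1 deg2; rewrite deg2 in le1.
Qed.

Lemma par_cyc (V E : finType) (ends : E -> {set V}) (C : {set E}) g x y :
  loopless ends -> unicyclic ends -> is_cycle ends C -> x \in C -> y \in C -> y != x -> g \notin C ->
  ends g != ends x.
Proof.
move=> L U cC xC yC yx gC; apply/eqP => Egx.
have gx : g != x by apply: contraNneq gC => ->.
have := cycles_eq U (cycle2 L gx Egx) cC => CE.
move: (yC); rewrite -CE !inE (negbTE yx) orbF => /eqP yg.
by move: gC; rewrite -yg yC.
Qed.

Lemma share2 (V E : finType) (ends : E -> {set V}) g x a b :
  ends x = [set a; b] -> share ends g x = (a \in ends g) || (b \in ends g).
Proof.
move=> xE; apply/shareP/orP => [[w wg]|[ag|bg]].
- by rewrite xE !inE => /orP[]/eqP <-; [left|right].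
- by exists a; rewrite // xE !inE eqxx.
- by exists b; rewrite // xE !inE eqxx orbT.
Qed.

Section Paw.
Variables (V1 E1 V2 E2 : finType) (ends1 : E1 -> {set V1}) (ends2 : E2 -> {set V2}).
Hypotheses (L1 : loopless ends1) (L2 : loopless ends2).
Hypotheses (K1 : connected_graph ends1).
Hypotheses (U1 : unicyclic ends1) (U2 : unicyclic ends2).
Hypothesis cardE : #|V1| = #|V2|.
Variables (phi : E1 -> E2) (psi : E2 -> E1).
Hypotheses (phiK : cancel phi psi) (psiK : cancel psi phi).
Hypothesis hlab : forall e f, dual_label ends2 (phi e) (phi f) = dual_label ends1 e f.
Variables (e1 e2 e3 : E1) (v a1 a2 a3 : V1) (p q r : V2).
Hypotheses (e12 : e1 != e2) (e23 : e2 != e3) (e13 : e1 != e3).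
Hypotheses (E1v : ends1 e1 = [set v; a1]) (E2v : ends1 e2 = [set v; a2]) (E3v : ends1 e3 = [set v; a3]).
Hypotheses (va1 : v != a1) (va2 : v != a2) (va3 : v != a3).
Hypotheses (a12 : a1 != a2) (a13 : a1 != a3) (a23 : a2 != a3).
Hypotheses (pq : p != q) (qr : q != r) (pr : p != r).
Hypotheses (X1 : ends2 (phi e1) = [set q; r]) (X2 : ends2 (phi e2) = [set p; r])
  (X3 : ends2 (phi e3) = [set p; q]).

Let phi_inj : injective phi := can_inj phiK.

Lemma T2cyc : is_cycle ends2 [set phi e1; phi e2; phi e3].
Proof.
apply: (cycle3 (a:=q) (b:=r) (c:=p)) => //; rewrite ?X2 1?setUC // eq_sym //.
Qed.

Lemma no_two g : g != phi e1 -> g != phi e2 -> g != phi e3 ->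
  [/\ ~~ ((q \in ends2 g) && (r \in ends2 g)), ~~ ((p \in ends2 g) && (r \in ends2 g))
    & ~~ ((p \in ends2 g) && (q \in ends2 g))].
Proof.
move=> g1 g2 g3.
have gT : g \notin [set phi e1; phi e2; phi e3] by rewrite !inE !negb_or g1 g2 g3.
have T1 : phi e1 \in [set phi e1; phi e2; phi e3] by rewrite !inE eqxx.
have T2 : phi e2 \in [set phi e1; phi e2; phi e3] by rewrite !inE eqxx orbT.
have T3 : phi e3 \in [set phi e1; phi e2; phi e3] by rewrite !inE eqxx !orbT.
have n12 : phi e2 != phi e1 by rewrite (inj_eq phi_inj) eq_sym.
have n23 : phi e3 != phi e2 by rewrite (inj_eq phi_inj) eq_sym.
have n13 : phi e1 != phi e3 by rewrite (inj_eq phi_inj).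
split; apply/negP => /andP[xg yg].
- have := par_cyc L2 U2 T2cyc T1 T2 n12 gT.
  by rewrite X1 (two_set (L2 g) xg yg qr) eqxx.
- have := par_cyc L2 U2 T2cyc T2 T3 n23 gT.
  by rewrite X2 (two_set (L2 g) xg yg pr) eqxx.
- have := par_cyc L2 U2 T2cyc T3 T1 n13 gT.
  by rewrite X3 (two_set (L2 g) xg yg pq) eqxx.
Qed.

Lemma hpat h : h != e1 -> h != e2 -> h != e3 ->
  [/\ v \notin ends1 h,
      (a1 \in ends1 h) = (q \in ends2 (phi h)) || (r \in ends2 (phi h)),
      (a2 \in ends1 h) = (p \in ends2 (phi h)) || (r \in ends2 (phi h)) &
      (a3 \in ends1 h) = (p \in ends2 (phi h)) || (q \in ends2 (phi h))] /\
  [/\ ~~ ((q \in ends2 (phi h)) && (r \in ends2 (phi h))), ~~ ((p \in ends2 (phi h)) && (r \in ends2 (phi h)))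
    & ~~ ((p \in ends2 (phi h)) && (q \in ends2 (phi h)))].
Proof.
move=> h1 h2 h3.
have g1 : phi h != phi e1 by rewrite (inj_eq phi_inj).
have g2 : phi h != phi e2 by rewrite (inj_eq phi_inj).
have g3 : phi h != phi e3 by rewrite (inj_eq phi_inj).
have [n1 n2 n3] := no_two g1 g2 g3.
have s1 := tr_share L1 L2 phi_inj hlab h1.
have s2 := tr_share L1 L2 phi_inj hlab h2.
have s3 := tr_share L1 L2 phi_inj hlab h3.
rewrite (share2 (phi h) X1) (share2 h E1v) in s1.
rewrite (share2 (phi h) X2) (share2 h E2v) in s2.
rewrite (share2 (phi h) X3) (share2 h E3v) in s3.
split; last by [].
move: n1 n2 n3 s1 s2 s3.
case: (v \in ends1 h); case: (p \in _); case: (q \in _); case: (r \in _) => //=;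
 by move=> _ _ _ <- <- <-.
Qed.



Lemma other_a h : h != e1 -> h != e2 -> h != e3 ->
  [/\ a1 \in ends1 h -> (a2 \in ends1 h) || (a3 \in ends1 h),
      a2 \in ends1 h -> (a1 \in ends1 h) || (a3 \in ends1 h) &
      a3 \in ends1 h -> (a1 \in ends1 h) || (a2 \in ends1 h)].
Proof.
move=> h1 h2 h3; case: (hpat h1 h2 h3) => [[vh -> -> ->] [n1 n2 n3]].
by move: n1 n2 n3; case: (p \in _); case: (q \in _); case: (r \in _).
Qed.

Lemma allX x : [\/ x = v, x = a1, x = a2 | x = a3].
Proof.
suff: x \in [set v; a1; a2; a3].
  by rewrite !inE => /orP[/orP[/orP[]|]|] /eqP ->; [constructor 1|constructor 2|constructor 3|constructor 4].
apply: (closed_all K1 (x0 := v)); first by rewrite !inE eqxx.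
move=> h u w uX uh wh.
have sub2 a b : a \in [set v; a1; a2; a3] -> b \in [set v; a1; a2; a3] -> w \in [set a; b] -> w \in [set v; a1; a2; a3].
  by move=> aX bX /set2P[]->.
have vX : v \in [set v; a1; a2; a3] by rewrite !inE eqxx.
have a1X : a1 \in [set v; a1; a2; a3] by rewrite !inE eqxx !orbT.
have a2X : a2 \in [set v; a1; a2; a3] by rewrite !inE eqxx !orbT.
have a3X : a3 \in [set v; a1; a2; a3] by rewrite !inE eqxx !orbT.
have [eh|h1] := eqVneq h e1; first by rewrite eh E1v in wh; apply: (sub2 v a1).
have [eh|h2] := eqVneq h e2; first by rewrite eh E2v in wh; apply: (sub2 v a2).
have [eh|h3] := eqVneq h e3; first by rewrite eh E3v in wh; apply: (sub2 v a3).
case: (hpat h1 h2 h3) => [[vh _ _ _] _].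
case: (other_a h1 h2 h3) => o1 o2 o3.
have : [\/ u = v, u = a1, u = a2 | u = a3].
  by move: uX; rewrite !inE => /orP[/orP[/orP[]|]|] /eqP ->; [constructor 1|constructor 2|constructor 3|constructor 4].
case=> ?; subst u.
- by rewrite uh in vh.
- case/orP: (o1 uh) => ah.
    by move: wh; rewrite (two_set (L1 h) uh ah a12); exact: (sub2 a1 a2 a1X a2X).
  by move: wh; rewrite (two_set (L1 h) uh ah a13); exact: (sub2 a1 a3 a1X a3X).
- have a21 : a2 != a1 by rewrite eq_sym.
  case/orP: (o2 uh) => ah.
    by move: wh; rewrite (two_set (L1 h) uh ah a21); exact: (sub2 a2 a1 a2X a1X).
  by move: wh; rewrite (two_set (L1 h) uh ah a23); exact: (sub2 a2 a3 a2X a3X).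
- have a31 : a3 != a1 by rewrite eq_sym.
  have a32 : a3 != a2 by rewrite eq_sym.
  case/orP: (o3 uh) => ah.
    by move: wh; rewrite (two_set (L1 h) uh ah a31); exact: (sub2 a3 a1 a3X a1X).
  by move: wh; rewrite (two_set (L1 h) uh ah a32); exact: (sub2 a3 a2 a3X a2X).
Qed.



Lemma exists_h0 : exists h0, [/\ h0 != e1, h0 != e2 & h0 != e3].
Proof.
case: (pickP (fun h => [&& h != e1, h != e2 & h != e3])) => [h /and3P[*]|none]; first by exists h.
have all h : [\/ h = e1, h = e2 | h = e3].
  move: (none h) => /negbT; rewrite !negb_and !negbK.
  by case/orP => [/eqP->|/orP[]/eqP->]; [constructor 1|constructor 2|constructor 3].
case: U1 => C [cC _]; case: (cC) => /set0Pn[e eC] _ _.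
have a1n2 : a1 \notin ends1 e2 by rewrite E2v !inE negb_or eq_sym va1 a12.
have a1n3 : a1 \notin ends1 e3 by rewrite E3v !inE negb_or eq_sym va1 a13.
have a2n1 : a2 \notin ends1 e1 by rewrite E1v !inE negb_or eq_sym va2 eq_sym a12.
have a2n3 : a2 \notin ends1 e3 by rewrite E3v !inE negb_or eq_sym va2 a23.
have a3n1 : a3 \notin ends1 e1 by rewrite E1v !inE negb_or eq_sym va3 eq_sym a13.
have a3n2 : a3 \notin ends1 e2 by rewrite E2v !inE negb_or eq_sym va3 eq_sym a23.
exfalso; case: (all e) => ?; subst e.
- apply: (deg_le1 (x := a1) cC eC); first by rewrite E1v !inE eqxx orbT.
  by move=> g _; case: (all g) => -> //; rewrite ?(negbTE a1n2) ?(negbTE a1n3).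
- apply: (deg_le1 (x := a2) cC eC); first by rewrite E2v !inE eqxx orbT.
  by move=> g _; case: (all g) => -> //; rewrite ?(negbTE a2n1) ?(negbTE a2n3).
- apply: (deg_le1 (x := a3) cC eC); first by rewrite E3v !inE eqxx orbT.
  by move=> g _; case: (all g) => -> //; rewrite ?(negbTE a3n1) ?(negbTE a3n2).
Qed.

Lemma pairs h : h != e1 -> h != e2 -> h != e3 ->
  [\/ ends1 h = [set a1; a2], ends1 h = [set a1; a3] | ends1 h = [set a2; a3]].
Proof.
move=> h1 h2 h3.
have : 0 < #|ends1 h| by rewrite L1.
case/card_gt0P => u uh.
case: (hpat h1 h2 h3) => [[vh _ _ _] _].
case: (other_a h1 h2 h3) => o1 o2 o3.
case: (allX u) => ?; subst u.
- by rewrite uh in vh.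
- case/orP: (o1 uh) => ah.
    by constructor 1; apply: two_set.
  by constructor 2; apply: two_set.
- case/orP: (o2 uh) => ah.
    by constructor 1; apply: two_set.
  by constructor 3; apply: two_set.
- case/orP: (o3 uh) => ah.
    by constructor 2; apply: two_set.
  by constructor 3; apply: two_set.
Qed.



Section PawFinal.
Variable h0 : E1.
Hypotheses (h01 : h0 != e1) (h02 : h0 != e2) (h03 : h0 != e3).
Hypothesis H0 : ends1 h0 = [set a1; a2].

Lemma alle h : [\/ h = e1, h = e2, h = e3 | h = h0].
Proof.
have [->|h1] := eqVneq h e1; first by constructor 1.
have [->|h2] := eqVneq h e2; first by constructor 2.
have [->|h3] := eqVneq h e3; first by constructor 3.
have [->|hh] := eqVneq h h0; first by constructor 4.
exfalso.
have a21 : a2 != a1 by rewrite eq_sym.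
have a31 : a3 != a1 by rewrite eq_sym.
have a32 : a3 != a2 by rewrite eq_sym.
have E2v' : ends1 e2 = [set a2; v] by rewrite E2v setUC.
have E3v' : ends1 e3 = [set a3; v] by rewrite E3v setUC.
have cT : is_cycle ends1 [set e1; h0; e2].
  by apply: (cycle3 (a := v) (b := a1) (c := a2)); rewrite // eq_sym.
case: (pairs h1 h2 h3) => hE.
- have hC : h \notin [set e1; h0; e2] by rewrite !inE !negb_or h1 hh h2.
  have := par_cyc (x := h0) (y := e1) L1 U1 cT _ _ _ hC.
  rewrite hE H0 eqxx !inE !eqxx ?orbT /= => /(_ isT isT); rewrite eq_sym h01 => /(_ isT) //.
- have cT' : is_cycle ends1 [set e1; h; e3].
    apply: (cycle3 (a := v) (b := a1) (c := a3)) => //; by rewrite eq_sym.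
  have := cycles_eq U1 cT cT' => /setP/(_ e2).
  by rewrite !inE eqxx orbT [e2 == e1]eq_sym [e2 == h]eq_sym (negbTE e12) (negbTE h2) (negbTE e23).
- have cT' : is_cycle ends1 [set e2; h; e3].
    apply: (cycle3 (a := v) (b := a2) (c := a3)) => //; by rewrite eq_sym.
  have := cycles_eq U1 cT cT' => /setP/(_ e1).
  by rewrite !inE eqxx [e1 == h]eq_sym (negbTE e12) (negbTE h1) (negbTE e13).
Qed.



Lemma paw_final : graph_iso ends1 ends2.
Proof.
case: (hpat h01 h02 h03) => [[vh A1 A2 A3] [n1 n2 n3]].
rewrite H0 !inE in A1 A2 A3.
rewrite eqxx /= in A1.
rewrite eqxx orbT in A2.
rewrite (eq_sym a3 a1) (negbTE a13) (eq_sym a3 a2) (negbTE a23) /= in A3.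
have rh : r \in ends2 (phi h0).
  by move: A1 A2 A3 n1 n2 n3; case: (p \in _); case: (q \in _); case: (r \in _).
have ph : p \notin ends2 (phi h0) by move: A3; case: (p \in _).
have qh : q \notin ends2 (phi h0) by move: A3; case: (p \in _); case: (q \in _).
have [s sr Eh0] := two_other (L2 (phi h0)) rh.
have sh : s \in ends2 (phi h0) by rewrite Eh0 !inE eqxx orbT.
have sp : s != p by apply: contraNneq ph => <-.
have sq : s != q by apply: contraNneq qh => <-.
pose fV x := if x == v then r else if x == a1 then q else if x == a2 then p else s.
pose dec w := if w == r then v else if w == q then a1 else if w == p then a2 else a3.
have a1v : (a1 == v) = false by rewrite eq_sym (negbTE va1).
have a2v : (a2 == v) = false by rewrite eq_sym (negbTE va2).
have a3v : (a3 == v) = false by rewrite eq_sym (negbTE va3).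
have a21 : (a2 == a1) = false by rewrite eq_sym (negbTE a12).
have a31 : (a3 == a1) = false by rewrite eq_sym (negbTE a13).
have a32 : (a3 == a2) = false by rewrite eq_sym (negbTE a23).
have qr' : (q == r) = false by apply: negbTE.
have pr' : (p == r) = false by apply: negbTE.
have pq' : (p == q) = false by apply: negbTE.
have fv : fV v = r by rewrite /fV eqxx.
have fa1 : fV a1 = q by rewrite /fV a1v eqxx.
have fa2 : fV a2 = p by rewrite /fV a2v a21 eqxx.
have fa3 : fV a3 = s by rewrite /fV a3v a31 a32.
have decK x : dec (fV x) = x.
  case: (allX x) => ->; rewrite ?fv ?fa1 ?fa2 ?fa3 /dec ?eqxx ?qr' ?pr' ?pq' //.
  by rewrite (negbTE sr) (negbTE sq) (negbTE sp).
have injV : injective fV by apply: (can_inj decK).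
pose sw e := if e == e3 then h0 else if e == h0 then e3 else e.
have swK : involutive sw.
  move=> e; rewrite /sw.
  have [->|ne3] := eqVneq e e3; first by rewrite /= (negbTE h03) eqxx.
  have [->|nh0] := eqVneq e h0; first by rewrite eqxx.
  by rewrite (negbTE ne3) (negbTE nh0).
exists fV, (phi \o sw); split.
- by apply: inj_card_bij injV _; rewrite cardE.
- exact: (bij_comp (Bijective phiK psiK) (inv_bij swK)).
move=> e; rewrite /= /sw.
case: (alle e) => ->.
- have e1h : (e1 == h0) = false by apply: negbTE; rewrite eq_sym.
  by rewrite (negbTE e13) e1h E1v imset2 fv fa1 X1 setUC.
- have e2h : (e2 == h0) = false by apply: negbTE; rewrite eq_sym.
  by rewrite (negbTE e23) e2h E2v imset2 fv fa2 X2 setUC.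
- by rewrite eqxx E3v imset2 fv fa3 Eh0.
- by rewrite (negbTE h03) eqxx H0 imset2 fa1 fa2 X3 setUC.
Qed.

End PawFinal.
End Paw.

Lemma paw_iso (V1 E1 V2 E2 : finType) (ends1 : E1 -> {set V1}) (ends2 : E2 -> {set V2})
  (L1 : loopless ends1) (L2 : loopless ends2) (K1 : connected_graph ends1)
  (U1 : unicyclic ends1) (U2 : unicyclic ends2) (cardE : #|V1| = #|V2|)
  (phi : E1 -> E2) (psi : E2 -> E1) (phiK : cancel phi psi) (psiK : cancel psi phi)
  (hlab : forall e f, dual_label ends2 (phi e) (phi f) = dual_label ends1 e f)
  (e1 e2 e3 : E1) (v a1 a2 a3 : V1) (p q r : V2)
  (e12 : e1 != e2) (e23 : e2 != e3) (e13 : e1 != e3)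
  (E1v : ends1 e1 = [set v; a1]) (E2v : ends1 e2 = [set v; a2]) (E3v : ends1 e3 = [set v; a3])
  (va1 : v != a1) (va2 : v != a2) (va3 : v != a3)
  (a12 : a1 != a2) (a13 : a1 != a3) (a23 : a2 != a3)
  (pq : p != q) (qr : q != r) (pr : p != r)
  (X1 : ends2 (phi e1) = [set q; r]) (X2 : ends2 (phi e2) = [set p; r])
  (X3 : ends2 (phi e3) = [set p; q]) : graph_iso ends1 ends2.
Proof.
have [h0 [h01 h02 h03]] := exists_h0 U1 E1v E2v E3v va1 va2 va3 a12 a13 a23.
have e32 : e3 != e2 by rewrite eq_sym.
have e31 : e3 != e1 by rewrite eq_sym.
have e21 : e2 != e1 by rewrite eq_sym.
have a32 : a3 != a2 by rewrite eq_sym.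
have a31 : a3 != a1 by rewrite eq_sym.
have a21 : a2 != a1 by rewrite eq_sym.
have rq : r != q by rewrite eq_sym.
have rp : r != p by rewrite eq_sym.
have qp : q != p by rewrite eq_sym.
case: (pairs L1 L2 K1 U2 phiK hlab e12 e23 e13 E1v E2v E3v a12 a13 a23 pq qr pr X1 X2 X3 h01 h02 h03) => H.
- exact: (paw_final L1 L2 K1 U1 U2 cardE phiK psiK hlab e12 e23 e13 E1v E2v E3v va1 va2 va3
          a12 a13 a23 pq qr pr X1 X2 X3 h01 h02 h03 H).
- have X1' : ends2 (phi e1) = [set r; q] by rewrite X1 setUC.
  exact: (paw_final L1 L2 K1 U1 U2 cardE phiK psiK hlab e13 e32 e12 E1v E3v E2v va1 va3 va2
          a13 a12 a32 pr rq pq X1' X3 X2 h01 h03 h02 H).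
- have X1' : ends2 (phi e2) = [set r; p] by rewrite X2 setUC.
  have X2' : ends2 (phi e3) = [set q; p] by rewrite X3 setUC.
  exact: (paw_final L1 L2 K1 U1 U2 cardE phiK psiK hlab e23 e31 e21 E2v E3v E1v va2 va3 va1
          a23 a21 a31 qr rp qp X1' X2' X1 h02 h03 h01 H).
Qed.

Lemma paw_setup (V1 E1 V2 E2 : finType) (ends1 : E1 -> {set V1}) (ends2 : E2 -> {set V2})
  (L1 : loopless ends1) (L2 : loopless ends2) (K1 : connected_graph ends1)
  (U1 : unicyclic ends1) (U2 : unicyclic ends2) (cardE : #|V1| = #|V2|)
  (phi : E1 -> E2) (psi : E2 -> E1) (phiK : cancel phi psi) (psiK : cancel psi phi)
  (hlab : forall e f, dual_label ends2 (phi e) (phi f) = dual_label ends1 e f)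
  (e1 e2 e3 : E1) (v : V1)
  (e12 : e1 != e2) (e23 : e2 != e3) (e13 : e1 != e3)
  (v1 : v \in ends1 e1) (v2 : v \in ends1 e2) (v3 : v \in ends1 e3)
  (nc : forall w, ~ [/\ w \in ends2 (phi e1), w \in ends2 (phi e2) & w \in ends2 (phi e3)]) :
  graph_iso ends1 ends2.
Proof.
have phi_inj : injective phi := can_inj phiK.
have sh e f : e != f -> v \in ends1 e -> v \in ends1 f -> share ends2 (phi e) (phi f).
  by move=> ef ve vf; rewrite (tr_share L1 L2 phi_inj hlab ef); apply/shareP; exists v.
have [r r1 r2] := shareP _ _ _ (sh _ _ e12 v1 v2).
have [q q1 q3] := shareP _ _ _ (sh _ _ e13 v1 v3).
have [p p2 p3] := shareP _ _ _ (sh _ _ e23 v2 v3).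
have r3 : r \notin ends2 (phi e3) by apply/negP => r3; apply: (nc r).
have q2 : q \notin ends2 (phi e2) by apply/negP => q2; apply: (nc q).
have p1 : p \notin ends2 (phi e1) by apply/negP => p1; apply: (nc p).
have pq : p != q by apply: contraNneq q2 => <-.
have qr : q != r by apply: contraNneq q2 => ->.
have pr : p != r by apply: contraNneq r3 => <-.
have X1 := two_set (L2 _) q1 r1 qr.
have X2 := two_set (L2 _) p2 r2 pr.
have X3 := two_set (L2 _) p3 q3 pq.
have d12 : ends1 e1 != ends1 e2.
  by rewrite -(tr_eq phi_inj hlab e12); apply: contraNneq q2 => <-.
have d13 : ends1 e1 != ends1 e3.
  by rewrite -(tr_eq phi_inj hlab e13); apply: contraNneq p1 => ->.
have d23 : ends1 e2 != ends1 e3.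
  by rewrite -(tr_eq phi_inj hlab e23); apply: contraNneq r3 => <-.
have [a1 a1v E1v] := two_other (L1 e1) v1.
have [a2 a2v E2v] := two_other (L1 e2) v2.
have [a3 a3v E3v] := two_other (L1 e3) v3.
have a12 : a1 != a2 by apply: contraNneq d12 => a12; rewrite E1v E2v a12.
have a13 : a1 != a3 by apply: contraNneq d13 => a13; rewrite E1v E3v a13.
have a23 : a2 != a3 by apply: contraNneq d23 => a23; rewrite E2v E3v a23.
have va1 : v != a1 by rewrite eq_sym.
have va2 : v != a2 by rewrite eq_sym.
have va3 : v != a3 by rewrite eq_sym.
exact: (paw_iso L1 L2 K1 U1 U2 cardE phiK psiK hlab e12 e23 e13 E1v E2v E3v va1 va2 va3
          a12 a13 a23 pq qr pr X1 X2 X3).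
Qed.

Lemma iso_sym (V1 E1 V2 E2 : finType) (ends1 : E1 -> {set V1}) (ends2 : E2 -> {set V2}) :
  graph_iso ends2 ends1 -> graph_iso ends1 ends2.
Proof.
case=> fV [fE [[gV fVK gVK] [gE fEK gEK] H]].
exists gV, gE; split; [exact: (Bijective gVK fVK) | exact: (Bijective gEK fEK) |].
move=> e; have := H (gE e); rewrite gEK => ->.
by rewrite -imset_comp (eq_imset _ fVK) imset_id.
Qed.

Lemma card_bij (T1 T2 : finType) : #|T1| = #|T2| -> exists f : T1 -> T2, bijective f.
Proof.
move=> cE.
exists (fun x => enum_val (cast_ord cE (enum_rank x))).
exists (fun y => enum_val (cast_ord (esym cE) (enum_rank y))).
  by move=> x /=; rewrite enum_valK cast_ordK enum_rankK.
by move=> y /=; rewrite enum_valK cast_ordKV enum_rankK.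
Qed.

Lemma ends_full (V E : finType) (ends : E -> {set V}) :
  loopless ends -> #|V| = 2 -> forall e, ends e = setT.
Proof.
move=> L c2 e; apply/eqP; rewrite eqEcard subsetT cardsT c2 L //.
Qed.

Theorem lemma6 (n : nat) (V1 E1 V2 E2 : finType)
    (ends1 : E1 -> {set V1}) (ends2 : E2 -> {set V2}) :
  #|V1| = n -> #|V2| = n ->
  loopless ends1 -> loopless ends2 ->
  connected_graph ends1 -> connected_graph ends2 ->
  unicyclic ends1 -> unicyclic ends2 ->
  dual_iso ends1 ends2 ->
  graph_iso ends1 ends2.
Proof.
move=> cV1 cV2 L1 L2 K1 K2 U1 U2 [phi [[psi phiK psiK] hlab]].
have cardE : #|V1| = #|V2| by rewrite cV1 cV2.
have phi_inj : injective phi := can_inj phiK.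
have n2 : 1 < #|V1|.
  case: U1 => C [[/set0Pn[e _] _ _] _].
  by rewrite -(L1 e) max_card.
have [c3|c2] := ltnP 2 #|V1|; last first.
  have c2' : #|V1| = 2 by apply/eqP; rewrite eqn_leq c2 n2.
  have [fV bV] := card_bij cardE.
  exists fV, phi; split => //; first exact: (Bijective phiK psiK).
  move=> e; rewrite (ends_full L1 c2') (ends_full L2 (etrans (esym cardE) c2')).
  apply/esym/eqP; rewrite eqEcard subsetT /= cardsT card_imset ?cardsT ?cardE //.
  exact: bij_inj.
have hlab' e f : dual_label ends1 (psi e) (psi f) = dual_label ends2 e f.
  by rewrite -hlab !psiK.
case: (classic (exists e f g v, [/\ e != f, f != g & e != g] /\ [/\ v \in ends1 e, v \in ends1 f & v \in ends1 g] /\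
   forall w, ~ [/\ w \in ends2 (phi e), w \in ends2 (phi f) & w \in ends2 (phi g)])).
  case=> e [f [g [v [[ef fg eg] [[ve vf vg] nc]]]]].
  exact: (paw_setup L1 L2 K1 U1 U2 cardE phiK psiK hlab ef fg eg ve vf vg nc).
move=> nC1.
case: (classic (exists e f g w, [/\ e != f, f != g & e != g] /\ [/\ w \in ends2 (phi e), w \in ends2 (phi f) & w \in ends2 (phi g)] /\
   forall v, ~ [/\ v \in ends1 e, v \in ends1 f & v \in ends1 g])).
  case=> e [f [g [w [[ef fg eg] [[we wf wg] nc]]]]].
  apply: iso_sym.
  have ef' : phi e != phi f by rewrite (inj_eq phi_inj).
  have fg' : phi f != phi g by rewrite (inj_eq phi_inj).
  have eg' : phi e != phi g by rewrite (inj_eq phi_inj).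
  have nc' : forall v, ~ [/\ v \in ends1 (psi (phi e)), v \in ends1 (psi (phi f)) & v \in ends1 (psi (phi g))].
    by rewrite !phiK.
  exact: (paw_setup L2 L1 K2 U2 U1 (esym cardE) psiK phiK hlab' ef' fg' eg' we wf wg nc').
move=> nC2.
apply: (main_iso L1 L2 K1 K2 c3 cardE phiK psiK hlab).
- move=> e f g v ef fg eg ve vf vg; apply: NNPP => H; apply: nC1.
  exists e, f, g, v; split; [by [] | split; [by [] | move=> w Hw]]; apply: H; exists w; exact: Hw.
- move=> e f g w ef fg eg we wf wg; apply: NNPP => H; apply: nC2.
  exists e, f, g, w; split; [by [] | split; [by [] | move=> v Hv]]; apply: H; exists v; exact: Hv.
Qed.
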